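(* There are no rational numbers (in particular, no integers) $x_1,x_2,x_3,d_1,d_2,d_3,L$ such that $\operatorname{rank}N\le 2$, $\operatorname{rank}N_1=2$, $\operatorname{rank}N_2=1$, and $\tilde p_2=\tilde p_3=\dots=\tilde p_8=0$. Likewise there are no such rational numbers with $\operatorname{rank}N\le 2$, $\operatorname{rank}N_1=2$, $\operatorname{rank}N_2=1$ satisfying $p_1=p_2=p_3=0$.
   Context: Define $p_1=x_2^2+x_3^2-d_1^2$, $p_2=x_3^2+x_1^2-d_2^2$, $p_3=x_1^2+x_2^2-d_3^2$, and $\tilde p_2=p_1+p_2+p_3$, $\tilde p_3=d_1p_1+d_2p_2+d_3p_3$, $\tilde p_4=x_1p_1+x_2p_2+x_3p_3$, $\tilde p_5=x_1d_1p_1+x_2d_2p_2+x_3d_3p_3$, $\tilde p_6=x_1^2p_1+x_2^2p_2+x_3^2p_3$, $\tilde p_7=d_1^2p_1+d_2^2p_2+d_3^2p_3$, $\tilde p_8=x_1^2d_1^2p_1+x_2^2d_2^2p_2+x_3^2d_3^2p_3$. $N$ is the $3\times 7$ matrix whose $i$-th row is $(1,\ d_i,\ x_i,\ x_id_i,\ x_i^2,\ d_i^2,\ x_i^2d_i^2)$; $N_1$ is the $3\times 2$ matrix with rows $(1,d_i)$; $N_2$ is the $3\times 2$ matrix with rows $(1,x_i)$, $i=1,2,3$. Ranks are over $\mathbb{Q}$. *)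

(* Defs.v *)
From HB Require Import structures.
From mathcomp Require Import all_boot all_order all_algebra.
Set Implicit Arguments. Unset Strict Implicit. Unset Printing Implicit Defensive.
Import Order.TTheory GRing.Theory Num.Theory.
Local Open Scope ring_scope.

Definition trip (a1 a2 a3 : rat) (i : 'I_3) : rat := nth 0 [:: a1; a2; a3] i.

Definition p1 (x1 x2 x3 d1 d2 d3 : rat) : rat := x2^+2 + x3^+2 - d1^+2.
Definition p2 (x1 x2 x3 d1 d2 d3 : rat) : rat := x3^+2 + x1^+2 - d2^+2.
Definition p3 (x1 x2 x3 d1 d2 d3 : rat) : rat := x1^+2 + x2^+2 - d3^+2.

Definition wsum (w1 w2 w3 x1 x2 x3 d1 d2 d3 : rat) : rat :=
  w1 * p1 x1 x2 x3 d1 d2 d3 + w2 * p2 x1 x2 x3 d1 d2 d3 + w3 * p3 x1 x2 x3 d1 d2 d3.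

Definition pt2 x1 x2 x3 d1 d2 d3 := wsum 1 1 1 x1 x2 x3 d1 d2 d3.
Definition pt3 x1 x2 x3 d1 d2 d3 := wsum d1 d2 d3 x1 x2 x3 d1 d2 d3.
Definition pt4 x1 x2 x3 d1 d2 d3 := wsum x1 x2 x3 x1 x2 x3 d1 d2 d3.
Definition pt5 x1 x2 x3 d1 d2 d3 := wsum (x1*d1) (x2*d2) (x3*d3) x1 x2 x3 d1 d2 d3.
Definition pt6 x1 x2 x3 d1 d2 d3 := wsum (x1^+2) (x2^+2) (x3^+2) x1 x2 x3 d1 d2 d3.
Definition pt7 x1 x2 x3 d1 d2 d3 := wsum (d1^+2) (d2^+2) (d3^+2) x1 x2 x3 d1 d2 d3.
Definition pt8 x1 x2 x3 d1 d2 d3 :=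
  wsum (x1^+2*d1^+2) (x2^+2*d2^+2) (x3^+2*d3^+2) x1 x2 x3 d1 d2 d3.

Definition Nmx (x1 x2 x3 d1 d2 d3 : rat) : 'M[rat]_(3, 7) :=
  \matrix_(i < 3, j < 7)
    let x := trip x1 x2 x3 i in let d := trip d1 d2 d3 i in
    nth 0 [:: 1; d; x; x * d; x^+2; d^+2; x^+2 * d^+2] j.

Definition N1mx (d1 d2 d3 : rat) : 'M[rat]_(3, 2) :=
  \matrix_(i < 3, j < 2) nth 0 [:: 1; trip d1 d2 d3 i] j.

Definition N2mx (x1 x2 x3 : rat) : 'M[rat]_(3, 2) :=
  \matrix_(i < 3, j < 2) nth 0 [:: 1; trip x1 x2 x3 i] j.

(* Main.v *)
Require Import Defs.
From HB Require Import structures.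
From mathcomp Require Import all_boot all_order all_algebra.
From mathcomp Require Import zify ring.
Import GRing.Theory Num.Theory.
Local Open Scope ring_scope.

Lemma nat_sqrt2 (a b : nat) : (2 * a ^ 2 = b ^ 2)%N -> a = 0%N.
Proof.
move=> h; case: (posnP a) => [//|a0].
have b0 : (0 < b)%N.
  case: (posnP b) => [b0|//]; move: h; rewrite b0 => /eqP.
  by rewrite muln_eq0 expn_eq0 (gtn_eqF a0).
have := congr1 (logn 2) h.
rewrite lognM // ?expn_gt0 ?a0 // !lognX (lognE 2 2) /=.
have -> : (2 %/ 2 = 1)%N by []. rewrite logn1. lia.
Qed.

Lemma rat_sqrt2 (x d : rat) : d ^+ 2 = 2 * x ^+ 2 -> x = 0.
Proof.
move=> h.
pose A := numq x * denq d; pose B := numq d * denq x.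
have hq : (B ^+ 2 - 2 * A ^+ 2)%:~R = 0 :> rat.
  rewrite /A /B !expr2 intrB !intrM !numqE.
  have -> : (d * (denq d)%:~R * (denq x)%:~R) ^+ 2 -
   (2%:~R : rat) * (x * (denq x)%:~R * (denq d)%:~R) ^+ 2
   = (d ^+ 2 - 2 * x ^+ 2) * ((denq d)%:~R * (denq x)%:~R) ^+ 2.
    rewrite (_ : (2%:~R : rat) = 2) //; ring.
  by rewrite h subrr mul0r.
move/eqP: hq; rewrite intr_eq0 subr_eq0 => /eqP hB.
have : (2 * `|A| ^ 2 = `|B| ^ 2)%N.
  by rewrite -!abszX hB abszM.
move/nat_sqrt2 => /eqP; rewrite absz_eq0 mulf_eq0 numq_eq0 => /orP [/eqP //|].
by rewrite denq_eq0.
Qed.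

Lemma rank2_of (M : 'M[rat]_(3,2)) (P : 'M[rat]_(2,3)) (a b : rat) :
  P *m M = \matrix_(i < 2, j < 2) nth 0 [:: 1; if i == ord0 then a else b] j ->
  a != b -> (2 <= \rank M)%N.
Proof.
move=> hP hab.
have hba : b - a != 0 by rewrite subr_eq0 eq_sym.
pose Q : 'M[rat]_2 := \matrix_(i < 2, j < 2)
   ((b - a)^-1 * nth 0 (if i == ord0 then [:: b; -a] else [:: -1; 1]) j).
have hu : P *m M *m Q = 1%:M.
  rewrite hP; apply/matrixP => i j; rewrite !mxE !big_ord_recr big_ord0 /= !mxE.
  case: i => [[|[|i]] Hi] //=; case: j => [[|[|j]] Hj] //=; rewrite ?mxE /=;
  field; done.
have [u _] := mulmx1_unit hu.
have := mxrankM_maxr P M; by rewrite (mxrank_unit u).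
Qed.

Definition Psel (r : nat) : 'M[rat]_(2,3) :=
  \matrix_(k < 2, l < 3) ((l : nat) == (if k == ord0 then 0%N else r))%:R.

Lemma N2_eq x1 x2 x3 : \rank (N2mx x1 x2 x3) = 1%N -> x1 = x2 /\ x1 = x3.
Proof.
move=> h; split; apply/eqP; apply/negPn/negP => hne.
- have := @rank2_of (N2mx x1 x2 x3) (Psel 1) x1 x2.
  rewrite h => H; suff: (2 <= 1)%N by []. apply: H hne.
  apply/matrixP => i j; rewrite !mxE !big_ord_recr big_ord0 /= !mxE.
  case: i => [[|[|i]] Hi] //=; case: j => [[|[|j]] Hj] //=; rewrite /trip /=; ring.
- have := @rank2_of (N2mx x1 x2 x3) (Psel 2) x1 x3.
  rewrite h => H; suff: (2 <= 1)%N by []. apply: H hne.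
  apply/matrixP => i j; rewrite !mxE !big_ord_recr big_ord0 /= !mxE.
  case: i => [[|[|i]] Hi] //=; case: j => [[|[|j]] Hj] //=; rewrite /trip /=; ring.
Qed.

Lemma N1_0 : (\rank (N1mx 0 0 0) <= 1)%N.
Proof.
have -> : N1mx 0 0 0 = (const_mx 1 : 'M[rat]_(3,1)) *m (\row_(j < 2) (j == ord0)%:R).
  apply/matrixP => i j; rewrite !mxE big_ord1 !mxE.
  by case: i => [[|[|[|i]]] Hi] //=; case: j => [[|[|j]] Hj] //=; rewrite /trip /= mul1r.
exact: leq_trans (mxrankM_maxr _ _) (rank_leq_row _).
Qed.

Lemma collapse (x d1 d2 d3 : rat) : d1^+2 = 2 * x^+2 -> d2^+2 = 2 * x^+2 ->
  d3^+2 = 2 * x^+2 -> [/\ d1 = 0, d2 = 0 & d3 = 0].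
Proof.
move=> h1 h2 h3; have x0 := @rat_sqrt2 x d1 h1.
move: h1 h2 h3; rewrite x0 expr0n /= mulr0 => /eqP h1 /eqP h2 /eqP h3.
by move: h1 h2 h3; rewrite !expf_eq0 /= => /eqP -> /eqP -> /eqP ->.
Qed.

Lemma sq3 (a b c : rat) : a^+2 + b^+2 + c^+2 = 0 -> [/\ a = 0, b = 0 & c = 0].
Proof.
move=> /eqP h; move: h; rewrite paddr_eq0 ?addr_ge0 ?sqr_ge0 //.
rewrite paddr_eq0 ?sqr_ge0 // !sqrf_eq0 => /andP [/andP [/eqP -> /eqP ->] /eqP ->].
done.
Qed.

Theorem theorem4p1 :
  (~ exists x1 x2 x3 d1 d2 d3 L : rat,
       [/\ (\rank (Nmx x1 x2 x3 d1 d2 d3) <= 2)%N,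
           \rank (N1mx d1 d2 d3) = 2%N,
           \rank (N2mx x1 x2 x3) = 1%N &
           (pt2 x1 x2 x3 d1 d2 d3 = 0 /\ pt3 x1 x2 x3 d1 d2 d3 = 0 /\
            pt4 x1 x2 x3 d1 d2 d3 = 0 /\ pt5 x1 x2 x3 d1 d2 d3 = 0 /\
            pt6 x1 x2 x3 d1 d2 d3 = 0 /\ pt7 x1 x2 x3 d1 d2 d3 = 0 /\
            pt8 x1 x2 x3 d1 d2 d3 = 0)]) /\
  (~ exists x1 x2 x3 d1 d2 d3 L : rat,
       [/\ (\rank (Nmx x1 x2 x3 d1 d2 d3) <= 2)%N,
           \rank (N1mx d1 d2 d3) = 2%N,
           \rank (N2mx x1 x2 x3) = 1%N &
           [/\ p1 x1 x2 x3 d1 d2 d3 = 0, p2 x1 x2 x3 d1 d2 d3 = 0 &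
               p3 x1 x2 x3 d1 d2 d3 = 0]]).
Proof.
split.
- move=> [x1 [x2 [x3 [d1 [d2 [d3 [L [_ h1 h2 [e2 [_ [_ [_ [_ [e7 _]]]]]]]]]]]]]].
  have [E2 E3] := @N2_eq _ _ _ h2; subst x2 x3.
  move: e2 e7; rewrite /pt2 /pt7 /wsum /p1 /p2 /p3 => e2 e7.
  have hs : (d1^+2 - 2 * x1^+2)^+2 + (d2^+2 - 2 * x1^+2)^+2 + (d3^+2 - 2 * x1^+2)^+2 = 0.
    have -> : (d1^+2 - 2 * x1^+2)^+2 + (d2^+2 - 2 * x1^+2)^+2 + (d3^+2 - 2 * x1^+2)^+2
      = - (d1 ^+ 2 * (x1 ^+ 2 + x1 ^+ 2 - d1 ^+ 2) + d2 ^+ 2 * (x1 ^+ 2 + x1 ^+ 2 - d2 ^+ 2) +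
      d3 ^+ 2 * (x1 ^+ 2 + x1 ^+ 2 - d3 ^+ 2))
       + 2 * x1^+2 * (1 * (x1 ^+ 2 + x1 ^+ 2 - d1 ^+ 2) + 1 * (x1 ^+ 2 + x1 ^+ 2 - d2 ^+ 2) +
      1 * (x1 ^+ 2 + x1 ^+ 2 - d3 ^+ 2)) by ring.
    by rewrite e2 e7 oppr0 mulr0 addr0.
  have [/eqP a1 /eqP a2 /eqP a3] := @sq3 _ _ _ hs.
  move: a1 a2 a3; rewrite !subr_eq0 => /eqP a1 /eqP a2 /eqP a3.
  have [F1 F2 F3] := @collapse _ _ _ _ a1 a2 a3.
  by move: h1; rewrite F1 F2 F3 => E; have := N1_0; rewrite E.
- move=> [x1 [x2 [x3 [d1 [d2 [d3 [L [_ h1 h2 [e1 e2 e3]]]]]]]]].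
  have [E2 E3] := @N2_eq _ _ _ h2; subst x2 x3.
  move: e1 e2 e3; rewrite /p1 /p2 /p3 => /eqP e1 /eqP e2 /eqP e3.
  move: e1 e2 e3; rewrite !subr_eq0 => /eqP e1 /eqP e2 /eqP e3.
  have t : forall d : rat, x1^+2 + x1^+2 = d^+2 -> d^+2 = 2 * x1^+2.
    by move=> d <-; rewrite mulr2n mulrDl mul1r.
  have [F1 F2 F3] := @collapse _ _ _ _ (t _ e1) (t _ e2) (t _ e3).
  by move: h1; rewrite F1 F2 F3 => E; have := N1_0; rewrite E.
Qed.
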